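(* Let $X_1,\dots,X_n$ be arbitrary (possibly dependent) random variables with values in $[0,1]$, let $m\ge 2$ be an integer and $p\in[0,1]$ such that $\mathbb{E}\prod_{i\in A}X_i\le p^{|A|}$ for every $A\subseteq[n]$ with $|A|\le m$. If $m\le np$, then $$\mathbb{E}\Big(\sum_{i=1}^n X_i\Big)^m\le(2e^2np)^m,$$ and consequently $\Pr\big(\sum_i X_i\ge\alpha np\big)\le\big(\frac{2e^2}{\alpha}\big)^m$ for every $\alpha>0$. *)

(* Defs.v *)
From HB Require Import structures.
From mathcomp Require Import all_boot all_order all_algebra.
From mathcomp Require Import all_classical all_reals all_analysis.

(* Main.v *)
Require Import Defs.
From HB Require Import structures.
From mathcomp Require Import all_boot all_order all_algebra.
From mathcomp Require Import all_classical all_reals all_analysis.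
From mathcomp Require Import ring lra measurable_realfun.
Import Order.TTheory GRing.Theory Num.Theory.
Local Open Scope classical_set_scope.
Local Open Scope ring_scope.

Section Helpers.
Context (d : measure_display) (T : measurableType d) (R : realType)
  (P : probability T R) (n : nat) (X : 'I_n -> {RV P >-> R}).
Hypothesis hX : forall i w, 0 <= X i w <= 1.

Definition SS w := \sum_(i < n) X i w.
Definition GG j (B : {set 'I_n}) w := SS w ^+ j * \prod_(i in B) X i w.

Lemma mX i : measurable_fun setT (X i).
Proof. exact: measurable_funP. Qed.

Lemma mSS : measurable_fun setT SS.
Proof. by apply: measurable_sum => i; exact: mX. Qed.

Lemma mGG j B : measurable_fun setT (GG j B).
Proof.
apply: measurable_funM; first exact/measurable_funX/mSS.
have -> : (fun w => \prod_(i in B) X i w) =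
   (fun w => \prod_(i <- index_enum 'I_n) (fun i w => if i \in B then X i w else 1) i w).
  by apply: funext => w; rewrite big_mkcond.
apply: measurable_prod => i _; case: (i \in B); [exact: mX | exact: measurable_cst].
Qed.

Lemma SS_ge0 w : 0 <= SS w.
Proof. by apply: sumr_ge0 => i _; case/andP: (hX i w). Qed.

Lemma GG_ge0 j B w : 0 <= GG j B w.
Proof.
apply: mulr_ge0; first exact/exprn_ge0/SS_ge0.
by apply: prodr_ge0 => i _; case/andP: (hX i w).
Qed.


Lemma key (m : nat) (p : R) (hp : 0 <= p <= 1)
  (hmom : forall A : {set 'I_n}, (#|A| <= m)%N ->
     ('E_P[fun w => (\prod_(i in A) X i w)%R] <= (p ^+ #|A|)%:E)%E)
  (hmnp : m%:R <= n%:R * p) :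
  forall j (B : {set 'I_n}), (#|B| + j <= m)%N ->
  ('E_P[GG j B] <= (((2 * n%:R * p) ^+ j) * p ^+ #|B|)%:E)%E.
Proof.
case/andP: hp => p0 p1.
elim=> [|j IH] B hB.
  rewrite expr0 mul1r.
  have -> : GG 0 B = (fun w => \prod_(i in B) X i w).
    by apply: funext => w; rewrite /GG expr0 mul1r.
  by apply: hmom; rewrite addn0 in hB.
set a : R := (2 * n%:R * p) ^+ j * p ^+ #|B|.
have a0 : 0 <= a by apply: mulr_ge0; apply: exprn_ge0 => //; apply: mulr_ge0 => //; apply: mulr_ge0.
pose c (x : 'I_n) := a * ((x \in B)%:R + p).
have -> : GG j.+1 B = (fun w => \sum_(x < n) (X x w * GG j B w)).
  by apply: funext => w; rewrite /GG exprS -mulrA mulr_suml.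
rewrite expectation.unlock.
under eq_integral do rewrite -sumEFin.
rewrite ge0_integral_sum //; first last.
- by move=> x w _; rewrite lee_fin; apply: mulr_ge0; [case/andP: (hX x w)|exact: GG_ge0].
- by move=> x; apply/measurable_EFinP/measurable_funM; [exact: mX | exact: mGG].
apply: (@le_trans _ _ (\sum_(x < n) (c x)%:E)%E).
  apply: lee_sum => x _.
  case xB: (x \in B).
  - apply: (@le_trans _ _ (\int[P]_w (GG j B w)%:E)%E).
      apply: ge0_le_integral => //.
      + by move=> w _; rewrite lee_fin; apply: mulr_ge0; [case/andP: (hX x w)|exact: GG_ge0].
      + by apply/measurable_EFinP/measurable_funM; [exact: mX | exact: mGG].
      + exact/measurable_EFinP/mGG.
      + move=> w _; rewrite lee_fin; apply: ler_piMl; first exact: GG_ge0.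
        by case/andP: (hX x w).
    have IH' := IH B; rewrite expectation.unlock in IH'.
    apply: (le_trans (IH' _)); first by apply: leq_trans hB; rewrite addnS.
    by rewrite lee_fin /c /= xB ler_peMr // lerDl.
  - have -> : (fun w => (X x w * GG j B w)%:E) = (fun w => (GG j (x |: B) w)%:E).
      apply: funext => w; congr (_%:E).
      by rewrite /GG big_setU1 /= ?xB // mulrCA.
    have IH' := IH (x |: B).
    rewrite expectation.unlock in IH'; apply: (le_trans (IH' _)).
      by rewrite cardsU1 xB add1n addSn -addnS.
    by rewrite cardsU1 xB add1n exprS lee_fin /c /a /= xB add0r [p * _]mulrC mulrA.
rewrite sumEFin lee_fin -mulr_sumr big_split /=.
rewrite sumr_const card_ord.
have -> : \sum_(x < n) ((x \in B)%:R : R) = #|B|%:R.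
  rewrite (eq_bigr (fun x => if x \in B then 1 else 0)); last by move=> x _; case: (x \in B).
  by rewrite -big_mkcond sumr_const.
have hBm : (#|B| <= m)%N by apply: leq_trans hB; rewrite leq_addr.
have : #|B|%:R <= m%:R :> R by rewrite ler_nat.
move=> hBm'.
rewrite /a exprS.
have -> : 2 * n%:R * p * (2 * n%:R * p) ^+ j * p ^+ #|B|
   = a * (2 * n%:R * p) by rewrite /a; ring.
apply: ler_wpM2l => //.
rewrite -mulr_natr; lra.
Qed.

End Helpers.

Theorem mainTheorem6 (d : measure_display) (T : measurableType d)
  (R : realType) (P : probability T R) (n m : nat)
  (X : 'I_n -> {RV P >-> R}) (p : R)
  (hX : forall i w, 0 <= X i w <= 1)
  (hm : (2 <= m)%N) (hp : 0 <= p <= 1)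
  (hmom : forall A : {set 'I_n}, (#|A| <= m)%N ->
     ('E_P[fun w => (\prod_(i in A) X i w)%R] <= (p ^+ #|A|)%:E)%E)
  (hmnp : m%:R <= n%:R * p) :
  ('E_P[fun w => ((\sum_(i < n) X i w) ^+ m)%R]
     <= ((2 * expR 1 ^+ 2 * n%:R * p) ^+ m)%:E)%E
  /\ (forall alpha : R, 0 < alpha ->
       (P [set w | (alpha * n%:R * p <= \sum_(i < n) X i w)%R]
          <= ((2 * expR 1 ^+ 2 / alpha) ^+ m)%:E)%E).
Proof.
have p0 : 0 <= p by case/andP: hp.
have n0 : 0 <= n%:R :> R by [].
have np0 : 0 < n%:R * p.
  have : 2%:R <= m%:R :> R by rewrite ler_nat.
  move=> h2; lra.
have e1 : 1 <= expR 1 ^+ 2 :> R.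
  apply: exprn_ege1; have := expR_ge1Dx (1 : R); lra.
have part1 : ('E_P[fun w => ((\sum_(i < n) X i w) ^+ m)%R]
     <= ((2 * expR 1 ^+ 2 * n%:R * p) ^+ m)%:E)%E.
  have h1 := @key d T R P n X hX m p hp hmom hmnp m (@finset.set0 'I_n).
  rewrite cards0 expr0 mulr1 add0n in h1.
  have -> : (fun w => ((\sum_(i < n) X i w) ^+ m)%R) = @GG d T R P n X m (@finset.set0 'I_n).
    by apply: funext => w; rewrite /GG big_set0 mulr1.
  apply: (le_trans (h1 (leqnn m))); rewrite lee_fin.
  apply: lerXn2r; rewrite ?nnegrE; [lra | nra | nra].
split => // alpha a0.
set c := alpha * n%:R * p.
have c0 : 0 < c by rewrite /c -mulrA mulr_gt0.
have mA : measurable [set w | c <= @SS d T R P n X w].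
  have := @mSS d T R P n X measurableT _ (@measurable_itv R `[c, +oo[).
  rewrite setTI; congr measurable; apply/seteqP; split => w /=; rewrite in_itv /= andbT //.
have -> : P [set w | c <= \sum_(i < n) X i w] =
    (\int[P]_w (\1_[set w | c <= @SS d T R P n X w] w)%:E)%E.
  by rewrite integral_indic // setIT.
have mS := @mSS d T R P n X.
apply: (@le_trans _ _ (\int[P]_w ((c^-1 ^+ m * @SS d T R P n X w ^+ m)%:E))%E).
  apply: ge0_le_integral => //.
  - exact/measurable_EFinP/measurable_indic.
  - apply/measurable_EFinP/measurable_funM; first exact: measurable_cst.
    exact: measurable_funX.
  - move=> w _; rewrite lee_fin indicE.
    case: (boolP (w \in _)) => [/set_mem /= hw|_].
      rewrite -exprMn; apply: exprn_ege1.
      by rewrite mulrC ler_pdivlMr // mul1r.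
    apply: mulr_ge0; apply: exprn_ge0; last exact: SS_ge0.
    by rewrite invr_ge0 ltW.
under eq_integral do rewrite EFinM.
rewrite ge0_integralZl_EFin //; last first.
- by apply: exprn_ge0; rewrite invr_ge0 ltW.
- exact/measurable_EFinP/measurable_funX.
- by move=> w _; rewrite lee_fin; apply: exprn_ge0; exact: SS_ge0.
rewrite expectation.unlock in part1.
apply: (le_trans (lee_wpmul2l _ part1)).
  by rewrite lee_fin; apply: exprn_ge0; rewrite invr_ge0 ltW.
rewrite -EFinM lee_fin -exprMn le_eqVlt; apply/orP; left; apply/eqP.
congr (_ ^+ _); rewrite /c; field.
by apply/and3P; split; apply/eqP => h; move: np0 a0; rewrite h ?mulr0 ?mul0r ltxx ?andbF.
Qed.
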